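(* Let $G$ be a Garside group. Then the center $Z(G)$ is cyclic if and only if any two Garside elements of $G$ are commensurable. Here ''Garside elements of $G$'' means elements $\Delta_1,\Delta_2$ arising as Garside elements of (possibly different) Garside structures $(G,G_1^+,\Delta_1)$ and $(G,G_2^+,\Delta_2)$ on the same group $G$.
   Context: An atomic monoid is a monoid $M$ generated by its atoms (elements $a\ne1$ such that $a=bc$ implies $b=1$ or $c=1$) in which, for each $a\in M$, the supremum $\|a\|$ of lengths of expressions of $a$ as a product of atoms is finite. On $M$ define $a\le_L b$ iff $ac=b$ for some $c\in M$, and $a\le_R b$ iff $ca=b$ for some $c\in M$. A Garside monoid is an atomic monoid $M$ that is left and right cancellative, such that $(M,\le_L)$ and $(M,\le_R)$ are lattices, and containing an element $\Delta$ (a Garside element) such that (a) for each $a\in M$, $a\le_L\Delta$ iff $a\le_R\Delta$, and (b) the set $\{a\in M: a\le_L\Delta\}$ is finite and generates $M$. A Garside group is the group of fractions $G$ of a Garside monoid $M$; $M$ is identified with its image $G^+\subset G$ (the positive monoid), and the triple $(G,G^+,\Delta)$ is called a Garside structure on $G$. A group may admit several Garside structures. In any Garside structure some positive power of $\Delta$ is central. Two elements $g,h$ of a group are commensurable if $g^k$ and $h^\ell$ are conjugate for some nonzero integers $k,\ell$. *)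

(* Defs.v *)
From Stdlib Require Import ZArith List.
Import ListNotations.
Set Implicit Arguments.

Record Group := {
  carrier :> Type;
  gmul : carrier -> carrier -> carrier;
  gone : carrier;
  ginv : carrier -> carrier;
  gmul_assoc : forall x y z, gmul x (gmul y z) = gmul (gmul x y) z;
  gmul_1l : forall x, gmul gone x = x;
  gmul_1r : forall x, gmul x gone = x;
  gmul_Vl : forall x, gmul (ginv x) x = gone;
  gmul_Vr : forall x, gmul x (ginv x) = gone
}.

Section GroupDefs.
Variable G : Group.
Local Notation "x * y" := (gmul G x y).
Local Notation "1" := (gone G).

Fixpoint gpow_nat (x : G) (n : nat) : G :=
  match n with O => 1 | S k => x * gpow_nat x k end.

Definition gpowZ (x : G) (k : Z) : G :=
  match k with
  | Z0 => 1
  | Zpos p => gpow_nat x (Pos.to_nat p)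
  | Zneg p => ginv G (gpow_nat x (Pos.to_nat p))
  end.

Definition prodl (l : list G) : G := fold_right (fun a b => a * b) 1 l.

Definition central (z : G) : Prop := forall x : G, z * x = x * z.
Definition center_cyclic : Prop :=
  exists z : G, central z /\ forall y : G, central y -> exists k : Z, y = gpowZ z k.

Definition commensurable (g h : G) : Prop :=
  exists (k l : Z) (x : G), k <> 0%Z /\ l <> 0%Z /\
    ginv G x * (gpowZ g k * x) = gpowZ h l.

Inductive gen_by (P : G -> Prop) : G -> Prop :=
  | gen_one : gen_by P 1
  | gen_el : forall a, P a -> gen_by P a
  | gen_inv : forall a, gen_by P a -> gen_by P (ginv G a)
  | gen_mul : forall a b, gen_by P a -> gen_by P b -> gen_by P (a * b).

Section Monoid.
(** [P] is (the image in G of) a candidate positive monoid M = G^+. *)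
Variable P : G -> Prop.

Definition submonoid : Prop :=
  P 1 /\ forall a b, P a -> P b -> P (a * b).

Definition leL (a b : G) : Prop := exists c, P c /\ a * c = b.
Definition leR (a b : G) : Prop := exists c, P c /\ c * a = b.

Definition atom (a : G) : Prop :=
  P a /\ a <> 1 /\ forall b c, P b -> P c -> a = b * c -> b = 1 \/ c = 1.

Definition atomic : Prop :=
  (forall a, P a -> exists l : list G, Forall atom l /\ prodl l = a) /\
  (forall a, P a -> exists N : nat, forall l : list G,
      Forall atom l -> prodl l = a -> length l <= N).

Definition is_lattice (le : G -> G -> Prop) : Prop :=
  (forall a b, P a -> P b -> exists m, P m /\ le m a /\ le m b /\
      forall c, P c -> le c a -> le c b -> le c m) /\
  (forall a b, P a -> P b -> exists j, P j /\ le a j /\ le b j /\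
      forall c, P c -> le a c -> le b c -> le j c).

Definition garside_element (D : G) : Prop :=
  P D /\
  (forall a, P a -> (leL a D <-> leR a D)) /\
  (exists l : list G, forall a, P a -> leL a D -> In a l) /\
  (forall a, P a -> exists l : list G,
      Forall (fun b => P b /\ leL b D) l /\ prodl l = a).

End Monoid.

(** A Garside structure (G, G^+, Delta) on G: G^+ is a Garside monoid with Garside
    element Delta, embedded in G, and G is its group of fractions (G^+ generates G;
    since G^+ is cancellative with common multiples, this is equivalent to G being
    the group of fractions).  Cancellativity of G^+ is automatic inside a group. *)
Definition garside_structure (P : G -> Prop) (D : G) : Prop :=
  submonoid P /\ atomic P /\ is_lattice P (leL P) /\ is_lattice P (leR P) /\
  garside_element P D /\ (forall g : G, gen_by P g).

Definition garside_group : Prop := exists P D, garside_structure P D.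

Definition is_garside_element_of_group (D : G) : Prop :=
  exists P, garside_structure P D.

End GroupDefs.

(* Main.v *)
Require Import Defs.
From Stdlib Require Import ZArith List Arith Lia Classical Factorial.
Import ListNotations.

Section Grp.
Variable G : Group.
Local Notation "x * y" := (gmul G x y).
Local Notation "1" := (gone G).
Local Notation inv := (ginv G).
Local Notation pw := (gpow_nat G).
Local Notation pz := (gpowZ G).

Lemma mulA x y z : x * (y * z) = (x * y) * z. Proof. apply gmul_assoc. Qed.
Lemma mul1l x : 1 * x = x. Proof. apply gmul_1l. Qed.
Lemma mul1r x : x * 1 = x. Proof. apply gmul_1r. Qed.
Lemma mulVl x : inv x * x = 1. Proof. apply gmul_Vl. Qed.
Lemma mulVr x : x * inv x = 1. Proof. apply gmul_Vr. Qed.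

Lemma cancel_l a b c : a * b = a * c -> b = c.
Proof. intro H. rewrite <- (mul1l b), <- (mul1l c), <- (mulVl a), <- !mulA, H. reflexivity. Qed.
Lemma cancel_r a b c : b * a = c * a -> b = c.
Proof. intro H. rewrite <- (mul1r b), <- (mul1r c), <- (mulVr a), !mulA, H. reflexivity. Qed.
Lemma inv_uniq a b : a * b = 1 -> b = inv a.
Proof. intro H. apply (cancel_l a). rewrite H, mulVr. reflexivity. Qed.
Lemma inv_mul a b : inv (a * b) = inv b * inv a.
Proof. symmetry. apply inv_uniq. rewrite <- mulA, (mulA b), mulVr, mul1l, mulVr. reflexivity. Qed.
Lemma inv_inv a : inv (inv a) = a.
Proof. symmetry. apply inv_uniq. apply mulVl. Qed.
Lemma inv_one : inv 1 = 1.
Proof. symmetry. apply inv_uniq. apply mul1l. Qed.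

Definition comm (x y : G) := x * y = y * x.

Lemma comm_sym x y : comm x y -> comm y x.
Proof. unfold comm; auto. Qed.
Lemma comm_mul x y z : comm x y -> comm x z -> comm x (y * z).
Proof. unfold comm; intros H1 H2. rewrite mulA, H1, <- mulA, H2, mulA. reflexivity. Qed.
Lemma comm_inv x y : comm x y -> comm x (inv y).
Proof. unfold comm; intros H. apply (cancel_r y). rewrite <- mulA, mulVl, mul1r.
  apply (cancel_l y). rewrite !mulA, mulVr, mul1l, H. reflexivity. Qed.
Lemma comm_one x : comm x 1. Proof. unfold comm. rewrite mul1l, mul1r. reflexivity. Qed.

Lemma pw_S x n : pw x (S n) = x * pw x n. Proof. reflexivity. Qed.
Lemma pw_comm x y n : comm x y -> comm x (pw y n).
Proof. intro H; induction n; simpl. apply comm_one. apply comm_mul; auto. Qed.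
Lemma pw_add x m n : pw x (m + n) = pw x m * pw x n.
Proof. induction m; simpl. rewrite mul1l; auto. rewrite IHm, mulA; auto. Qed.
Lemma pw_Sr x n : pw x (S n) = pw x n * x.
Proof. replace (S n) with (n + 1) by lia. rewrite pw_add. simpl. rewrite mul1r. auto. Qed.
Lemma pw_mul x m n : pw x (Nat.mul m n) = pw (pw x m) n.
Proof. induction n; simpl. rewrite Nat.mul_0_r; auto.
  replace (Nat.mul m (S n)) with (m + Nat.mul m n) by lia. rewrite pw_add, IHn. auto. Qed.
Lemma pw_mulx x y n : comm x y -> pw (x * y) n = pw x n * pw y n.
Proof. intro H; induction n; simpl. rewrite mul1l; auto.
  rewrite IHn. rewrite <- !mulA. f_equal. rewrite !mulA. f_equal.
  first [apply pw_comm, comm_sym; auto | symmetry; apply pw_comm, comm_sym; auto]. Qed.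
Lemma pw_one n : pw 1 n = 1.
Proof. induction n; simpl; auto. rewrite IHn, mul1l; auto. Qed.
Lemma pw_inv x n : inv (pw x n) = pw (inv x) n.
Proof. induction n; simpl. apply inv_one. rewrite inv_mul, IHn. rewrite <- pw_Sr. reflexivity. Qed.

Lemma pz_nat x n : pz x (Z.of_nat n) = pw x n.
Proof. destruct n; simpl; auto. rewrite SuccNat2Pos.id_succ. auto. Qed.
Lemma pz_negnat x n : pz x (- Z.of_nat n) = inv (pw x n).
Proof. destruct n; simpl. rewrite inv_one; auto. rewrite SuccNat2Pos.id_succ. auto. Qed.
Lemma Z_cases k : (exists n, k = Z.of_nat n) \/ (exists n, k = (- Z.of_nat n)%Z).
Proof. destruct (Z_le_gt_dec 0 k). left. exists (Z.to_nat k). lia. right. exists (Z.to_nat (-k)). lia. Qed.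

Lemma pz_succ x k : pz x (Z.succ k) = pz x k * x.
Proof. destruct (Z_cases k) as [[n ->]|[n ->]].
  - replace (Z.succ (Z.of_nat n)) with (Z.of_nat (S n)) by lia. rewrite !pz_nat, pw_Sr; auto.
  - destruct n as [|n]. { simpl. rewrite mul1l, mul1r; auto. }
    replace (Z.succ (- Z.of_nat (S n))) with (- Z.of_nat n)%Z by lia. rewrite !pz_negnat.
    simpl. rewrite inv_mul, <- mulA, mulVl, mul1r. auto. Qed.
Lemma pz_pred x k : pz x (Z.pred k) = pz x k * inv x.
Proof. rewrite <- (Z.succ_pred k) at 2. rewrite pz_succ, <- mulA, mulVr, mul1r. auto. Qed.
Lemma pz_0 x : pz x 0 = 1. Proof. reflexivity. Qed.
Lemma pz_1 x : pz x 1 = x. Proof. simpl. apply mul1r. Qed.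

Lemma pz_add x a b : pz x (a + b) = pz x a * pz x b.
Proof. induction b using Z.peano_ind.
  - rewrite Z.add_0_r, pz_0, mul1r; auto.
  - rewrite Z.add_succ_r, !pz_succ, IHb, mulA; auto.
  - rewrite Z.add_pred_r, !pz_pred, IHb, mulA; auto. Qed.
Lemma pz_opp x k : pz x (- k) = inv (pz x k).
Proof. apply inv_uniq. rewrite <- pz_add. replace (k + - k)%Z with 0%Z by lia. auto. Qed.
Lemma pz_mul x a b : pz x (Z.mul a b) = pz (pz x a) b.
Proof. induction b using Z.peano_ind.
  - rewrite Z.mul_0_r; auto.
  - rewrite Z.mul_succ_r, pz_add, pz_succ, IHb; auto.
  - rewrite Z.mul_pred_r, <- Z.add_opp_r, pz_add, pz_pred, pz_opp, IHb; auto. Qed.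
Lemma pz_comm x y k : comm x y -> comm x (pz y k).
Proof. intro H. induction k using Z.peano_ind.
  - apply comm_one.
  - rewrite pz_succ. apply comm_mul; auto.
  - rewrite pz_pred. apply comm_mul; auto. apply comm_inv; auto. Qed.
Lemma pz_mulx x y k : comm x y -> pz (x * y) k = pz x k * pz y k.
Proof. intro H. induction k using Z.peano_ind.
  - rewrite !pz_0, mul1l; auto.
  - rewrite !pz_succ, IHk. rewrite <- !mulA. f_equal. rewrite !mulA. f_equal.
    symmetry; apply pz_comm; auto.
  - rewrite !pz_pred, IHk, inv_mul. rewrite <- !mulA. f_equal. rewrite mulA.
    assert (Hc : comm (inv x) (pz y k * inv y)).
    { apply comm_mul. apply comm_sym, comm_inv, comm_sym, pz_comm, H.
      apply comm_sym, comm_inv, comm_sym, comm_inv, H. }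
    rewrite Hc. reflexivity. Qed.
Lemma pz_one k : pz 1 k = 1.
Proof. induction k using Z.peano_ind; auto. rewrite pz_succ, IHk, mul1l; auto.
  rewrite pz_pred, IHk, inv_one, mul1l; auto. Qed.

Lemma central_comm z x : central G z -> comm z x. Proof. unfold central, comm; auto. Qed.
Lemma comm_central z x : central G z -> comm x z. Proof. unfold central, comm; intros H; rewrite H; auto. Qed.
Lemma central_mul a b : central G a -> central G b -> central G (a * b).
Proof. intros Ha Hb x. apply comm_sym, comm_mul; apply comm_central; auto. Qed.
Lemma central_inv a : central G a -> central G (inv a).
Proof. intros Ha x. apply comm_sym, comm_inv, comm_central, Ha. Qed.
Lemma central_pz a k : central G a -> central G (pz a k).
Proof. intros Ha x. apply comm_sym, pz_comm, comm_central, Ha. Qed.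
Lemma central_pw a k : central G a -> central G (pw a k).
Proof. intros Ha x. apply comm_sym, pw_comm, comm_central, Ha. Qed.

Lemma prodl_app l1 l2 : prodl G (l1 ++ l2) = prodl G l1 * prodl G l2.
Proof. induction l1; simpl. rewrite mul1l; auto. rewrite IHl1, mulA; auto. Qed.

End Grp.

Section Gar.
Variable G : Group.
Local Notation "x * y" := (gmul G x y).
Local Notation "1" := (gone G).
Local Notation inv := (ginv G).
Local Notation pw := (gpow_nat G).
Local Notation pz := (gpowZ G).
Variable P : G -> Prop.
Variable D : G.
Hypothesis HS : garside_structure G P D.

Local Notation leL := (leL G P).
Local Notation leR := (leR G P).

Lemma P1 : P 1. Proof. destruct HS as [[H _] _]. exact H. Qed.
Lemma Pmul a b : P a -> P b -> P (a * b). Proof. destruct HS as [[_ H] _]. apply H. Qed.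
Lemma Pgen a : P a -> exists l, Forall (atom G P) l /\ prodl G l = a.
Proof. destruct HS as [_ [[H _] _]]. apply H. Qed.
Lemma Pbnd a : P a -> exists N, forall l, Forall (atom G P) l -> prodl G l = a -> length l <= N.
Proof. destruct HS as [_ [[_ H] _]]. apply H. Qed.
Lemma latL : is_lattice G P leL. Proof. destruct HS as [_ [_ [H _]]]. exact H. Qed.
Lemma gelD : garside_element G P D. Proof. destruct HS as [_ [_ [_ [_ [H _]]]]]. exact H. Qed.
Lemma genall g : gen_by G P g. Proof. destruct HS as [_ [_ [_ [_ [_ H]]]]]. apply H. Qed.
Lemma PD : P D. Proof. destruct gelD as [H _]. exact H. Qed.

Lemma Ppw x n : P x -> P (pw x n).
Proof. intro H; induction n; simpl. apply P1. apply Pmul; auto. Qed.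

Lemma prodl_P l : Forall P l -> P (prodl G l).
Proof. induction 1; simpl. apply P1. apply Pmul; auto. Qed.

Lemma atom_P a : atom G P a -> P a. Proof. intros [H _]; exact H. Qed.

Lemma rep_prod l n : prodl G (concat (repeat l n)) = pw (prodl G l) n.
Proof. induction n; simpl; auto. rewrite prodl_app, IHn. auto. Qed.
Lemma rep_len (l : list G) n : length (concat (repeat l n)) = Nat.mul n (length l).
Proof. induction n; simpl; auto. rewrite length_app, IHn. lia. Qed.
Lemma rep_Forall (Q : G -> Prop) l n : Forall Q l -> Forall Q (concat (repeat l n)).
Proof. intro H; induction n; simpl; auto. apply Forall_app; split; auto. Qed.

Lemma unit1 a b : P a -> P b -> a * b = 1 -> a = 1.
Proof. intros Ha Hb Hab.
  destruct (Pgen a Ha) as [la [Fa Ea]]. destruct (Pgen b Hb) as [lb [Fb Eb]].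
  destruct (Pbnd 1 P1) as [N HN].
  specialize (HN (concat (repeat (la ++ lb) (S N)))).
  rewrite rep_prod, rep_len, prodl_app, Ea, Eb, Hab, pw_one in HN.
  specialize (HN (rep_Forall _ _ _ (proj2 (Forall_app _ _ _) (conj Fa Fb))) eq_refl).
  rewrite length_app in HN. destruct la. simpl in Ea. auto. simpl in HN. lia. Qed.

Lemma unit_inv a : P a -> P (inv a) -> a = 1.
Proof. intros. apply (unit1 a (inv a)); auto. apply mulVr. Qed.

Lemma leL_refl a : leL a a. Proof. exists 1. split. apply P1. apply mul1r. Qed.
Lemma leL_trans a b c : leL a b -> leL b c -> leL a c.
Proof. intros [x [Hx E1]] [y [Hy E2]]. exists (x * y). split. apply Pmul; auto.
  rewrite mulA, E1; auto. Qed.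
Lemma leL_mul x a b : leL a b -> leL (x * a) (x * b).
Proof. intros [y [Hy E]]. exists y. split; auto. rewrite <- mulA, E. auto. Qed.

Definition simple s := P s /\ leL s D.

Lemma simp_fin : exists Ls, forall s, simple s -> In s Ls.
Proof. destruct gelD as [_ [_ [[l Hl] _]]]. exists l. intros s [H1 H2]. auto. Qed.

Lemma simp_gen a : P a -> exists l, Forall simple l /\ prodl G l = a.
Proof. destruct gelD as [_ [_ [_ H]]]. intro Ha. destruct (H a Ha) as [l [F E]].
  exists l. split; auto. Qed.

Lemma simp_bal a : P a -> leR a D -> leL a D.
Proof. destruct gelD as [_ [H _]]. intros Ha Hr. apply H; auto. Qed.

Definition phi x := inv D * (x * D).

Lemma phi_simple s : simple s -> simple (phi s).
Proof. intros [Ps [t [Pt Et]]].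
  assert (Ht : leL t D). { apply simp_bal; auto. exists s; auto. }
  destruct Ht as [u [Pu Eu]].
  assert (phi s = u).
  { assert (E : s * D = D * u). { rewrite <- Eu at 1. rewrite mulA, Et. auto. }
    unfold phi. rewrite E, mulA, mulVl, mul1l. auto. }
  rewrite H. split; auto. apply simp_bal; auto. exists t. split; auto. Qed.

Definition phin n x := inv (pw D n) * (x * pw D n).

Lemma phin_S n x : phin (S n) x = phin n (phi x).
Proof. unfold phin, phi. rewrite pw_S, inv_mul. rewrite !mulA. reflexivity. Qed.

Lemma phin_simple n s : simple s -> simple (phin n s).
Proof. revert s; induction n; intros s Hs.
  unfold phin; simpl. rewrite inv_one, mul1l, mul1r; auto.
  rewrite phin_S. apply IHn, phi_simple, Hs. Qed.

Lemma phin_add i d x : phin (i + d) x = phin d (phin i x).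
Proof. unfold phin. rewrite pw_add, inv_mul. rewrite !mulA. reflexivity. Qed.

Lemma fact_div n d : 1 <= d <= n -> exists q, fact n = Nat.mul q d.
Proof. induction n; intros Hd. lia.
  destruct (Nat.eq_dec d (S n)). subst. exists (fact n). simpl. lia.
  destruct (IHn ltac:(lia)) as [q Hq]. exists (Nat.mul (S n) q). simpl. rewrite Hq. lia. Qed.

Lemma simple_period (Ls : list G) : (forall s, simple s -> In s Ls) ->
  forall s, simple s -> comm G (pw D (fact (length Ls))) s.
Proof. intros HL s Hs.
  set (n := length Ls).
  set (l := map (fun i => phin i s) (seq 0 (S n))).
  assert (Hnd : ~ NoDup l).
  { intro Hnd. apply NoDup_incl_length with (l' := Ls) in Hnd.
    unfold l in Hnd. rewrite length_map, length_seq in Hnd. unfold n in Hnd. lia.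
    intros x Hx. unfold l in Hx. apply in_map_iff in Hx. destruct Hx as [i [<- _]].
    apply HL, phin_simple, Hs. }
  rewrite (NoDup_nth l s) in Hnd.
  apply not_all_ex_not in Hnd. destruct Hnd as [i Hi].
  apply not_all_ex_not in Hi. destruct Hi as [j Hj].
  apply imply_to_and in Hj. destruct Hj as [Hi Hj].
  apply imply_to_and in Hj. destruct Hj as [Hj Hj2].
  apply imply_to_and in Hj2. destruct Hj2 as [Eij Nij].
  unfold l in Hi, Hj, Eij. rewrite length_map, length_seq in Hi, Hj.
  assert (Hn : forall k, k < S n -> nth k l s = phin k s).
  { intros k Hk. unfold l. rewrite nth_indep with (d' := phin 0 s).
    change (phin 0 s) with ((fun i => phin i s) 0). rewrite map_nth, seq_nth; auto. rewrite length_map, length_seq; auto. }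
  fold l in Eij. rewrite !Hn in Eij by lia.
  assert (Hgen : forall a b, a < b -> b <= n -> phin a s = phin b s ->
     comm G (pw D (fact n)) s).
  { intros a b Hab Hb E.
    set (d := b - a). replace b with (a + d) in E by (unfold d; lia).
    rewrite phin_add in E. set (t := phin a s) in E.
    assert (Ct : comm G (pw D d) t).
    { unfold phin in E. unfold comm. apply (cancel_l G (inv (pw D d))).
      rewrite mulA, mulVl, mul1l. auto. }
    assert (Es : s = pw D a * (t * inv (pw D a))).
    { unfold t, phin. rewrite !mulA, mulVr, mul1l, <- mulA, mulVr, mul1r. auto. }
    destruct (fact_div n d) as [q Hq]. unfold d; lia.
    rewrite Hq, Nat.mul_comm, pw_mul. apply comm_sym, pw_comm, comm_sym. rewrite Es at 1.
    assert (C1 : comm G (pw D d) (pw D a)).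
    { unfold comm. rewrite <- !pw_add. f_equal. lia. }
    apply comm_mul. auto. apply comm_mul. auto. apply comm_inv. auto. }
  destruct (Nat.lt_total i j) as [H|[H|H]]; [ | lia | ].
  apply (Hgen i j); auto; lia.
  apply (Hgen j i); auto; lia. Qed.

Lemma gen_by_ind (Q : G -> Prop) : Q 1 -> (forall a, P a -> Q a) ->
  (forall a, Q a -> Q (inv a)) -> (forall a b, Q a -> Q b -> Q (a * b)) -> forall g, Q g.
Proof. intros H1 H2 H3 H4 g. induction (genall g); auto. Qed.

Lemma delta_central : exists N, 1 <= N /\ central G (pw D N).
Proof. destruct simp_fin as [Ls HL]. exists (fact (length Ls)). split.
  pose proof (lt_O_fact (length Ls)). lia.
  set (c := pw D (fact (length Ls))).
  assert (HP : forall a, P a -> comm G c a).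
  { intros a Ha. destruct (simp_gen a Ha) as [l [F <-]]. clear Ha. induction F; simpl.
    apply comm_one. apply comm_mul; auto. apply simple_period; auto. }
  intro x. apply (gen_by_ind (fun x => comm G c x)); auto.
  apply comm_one. intros. apply comm_inv; auto. intros. apply comm_mul; auto. Qed.

End Gar.

Fixpoint words {A : Type} (L : list A) (n : nat) : list (list A) :=
  match n with
  | 0 => [[]]
  | S n => [] :: flat_map (fun x => map (cons x) (words L n)) L
  end.

Lemma words_in {A : Type} (L : list A) n l :
  (forall x, In x l -> In x L) -> length l <= n -> In l (words L n).
Proof. revert l; induction n; intros l H1 H2; destruct l as [|x l]; simpl in *; auto; try lia.
  right. apply in_flat_map. exists x. split; auto. apply in_map. apply IHn; auto. lia. Qed.

Section Gar2.
Variable G : Group.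
Local Notation "x * y" := (gmul G x y).
Local Notation "1" := (gone G).
Local Notation inv := (ginv G).
Local Notation pw := (gpow_nat G).
Local Notation pz := (gpowZ G).
Variable P : G -> Prop.
Variable D : G.
Hypothesis HS : garside_structure G P D.
Variable N : nat.
Hypothesis HN : 1 <= N.
Hypothesis Hc : central G (pw D N).
Local Notation c := (pw D N).
Local Notation leL := (leL G P).

Lemma Pc : P c. Proof. apply (Ppw G P D HS); auto. apply (PD G P D HS). Qed.

Lemma inv_simple_c s : simple G P D s -> P (inv s * c).
Proof. intros [Ps [t [Pt Et]]]. destruct N as [|N']. lia. rewrite pw_S. rewrite <- Et at 1.
  rewrite !mulA, mulVl, mul1l. apply (Pmul G P D HS); auto. apply (Ppw G P D HS); auto. apply (PD G P D HS). Qed.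

Lemma inv_P_c p : P p -> exists j, P (inv p * pw c j).
Proof. intro Hp. destruct (simp_gen G P D HS p Hp) as [l [F <-]]. clear Hp. induction F; simpl.
  - exists 0. simpl. rewrite inv_one, mul1l. apply (P1 G P D HS).
  - destruct IHF as [j Hj]. exists (S j). rewrite inv_mul.
    replace (inv (prodl G l) * inv x * pw c (S j)) with ((inv (prodl G l) * pw c j) * (inv x * c)).
    apply (Pmul G P D HS); auto. apply inv_simple_c; auto.
    rewrite pw_Sr. rewrite !mulA. f_equal. rewrite <- !mulA. f_equal.
    apply (central_pw G c j Hc). Qed.

Lemma all_frac g : exists k, P (g * pw c k).
Proof. apply (gen_by_ind G P D HS (fun g => exists k, P (g * pw c k))).
  - exists 0. simpl. rewrite mul1l. apply (P1 G P D HS).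
  - intros a Ha. exists 0. simpl. rewrite mul1r. auto.
  - intros a [k Hk]. destruct (inv_P_c _ Hk) as [j Hj]. exists j.
    assert (E : inv a = pw c k * inv (a * pw c k)).
    { rewrite inv_mul, mulA, mulVr, mul1l. auto. }
    rewrite E, <- mulA. apply (Pmul G P D HS); auto. apply (Ppw G P D HS); auto. apply Pc.
  - intros a b [ka Ha] [kb Hb]. exists (ka + kb). rewrite pw_add.
    replace (a * b * (pw c ka * pw c kb)) with ((a * pw c ka) * (b * pw c kb)).
    apply (Pmul G P D HS); auto.
    rewrite !mulA. f_equal. rewrite <- !mulA. f_equal.
    apply (central_pw G c ka Hc b). Qed.

Lemma triv : c = 1 -> forall g, g = 1.
Proof. intros E g. destruct (all_frac g) as [k Hk]. destruct (all_frac (inv g)) as [k' Hk'].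
  rewrite E, pw_one, mul1r in Hk, Hk'. apply (unit_inv G P D HS); auto. Qed.

Lemma atom_in a l : atom G P a -> Forall P l -> prodl G l = a -> In a l.
Proof. intros Ha F. revert a Ha. induction F; intros a Ha E; simpl in *.
  - destruct Ha as [_ [H _]]. congruence.
  - destruct Ha as [Pa [N1 Hat]].
    destruct (Hat x (prodl G l) H ((prodl_P G P D HS) _ F) (eq_sym E)) as [E1|E1].
    + right. apply IHF. exact (conj Pa (conj N1 Hat)). rewrite <- E, E1, mul1l. auto.
    + left. rewrite <- E, E1, mul1r. auto. Qed.

Lemma atom_simple a : atom G P a -> simple G P D a.
Proof. intro Ha. destruct (simp_gen G P D HS a (atom_P G P a Ha)) as [l [F E]].
  assert (In a l). { apply atom_in; auto. eapply Forall_impl; [|exact F]. intros x [H _]; auto. }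
  rewrite Forall_forall in F. auto. Qed.

Lemma central_garside z k : central G z -> P (z * pw c k) ->
  garside_element G P (c * (z * pw c k)).
Proof. intros Hz Hw. set (E := c * (z * pw c k)).
  assert (HE : central G E). { apply central_mul; auto. apply central_mul; auto. apply central_pw; auto. }
  assert (PE : P E). { apply (Pmul G P D HS); auto. apply Pc. }
  split; [auto|split; [|split]].
  - intros a Ha. split.
    + intros [x [Px Ex]]. exists x. split; auto. apply (cancel_l G a). rewrite mulA, Ex. apply (HE a).
    + intros [x [Px Ex]]. exists x. split; auto. apply (cancel_r G a). rewrite <- mulA, Ex. symmetry; apply (HE a).
  - destruct (simp_fin G P D HS) as [Ls HL]. destruct (Pbnd G P D HS E PE) as [M HM].
    exists (map (prodl G) (words Ls M)). intros a Ha [b [Pb Eb]].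
    destruct (Pgen G P D HS a Ha) as [la [Fa Ea]]. destruct (Pgen G P D HS b Pb) as [lb [Fb Eb']].
    assert (Hl : length (la ++ lb) <= M). { apply HM. apply Forall_app; auto. rewrite prodl_app, Ea, Eb'. auto. }
    rewrite <- Ea. apply in_map. apply words_in. intros x Hx. apply HL, atom_simple.
    rewrite Forall_forall in Fa; auto. rewrite length_app in Hl. lia.
  - intros a Ha. destruct (simp_gen G P D HS a Ha) as [l [F El]]. exists l. split; auto.
    eapply Forall_impl; [|exact F]. intros s [Ps Hs]. split; auto.
    apply (leL_trans G P D HS) with D; auto.
    assert (Ec : c = D * pw D (N - 1)). { rewrite <- pw_S. f_equal. lia. }
    exists (pw D (N - 1) * (z * pw c k)). split.
    apply (Pmul G P D HS); auto. apply (Ppw G P D HS), (PD G P D HS).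
    unfold E. rewrite mulA, <- Ec. auto. Qed.

Lemma glb_ex Y : Y <> [] -> Forall P Y -> exists m, P m /\ (forall y, In y Y -> leL m y) /\
  (forall b, P b -> (forall y, In y Y -> leL b y) -> leL b m).
Proof. induction Y as [|a Y IH]; intros Hne F. congruence.
  inversion F; subst. destruct Y as [|a' Y'].
  - exists a. split; auto. split. intros y [<-|[]]. apply (leL_refl G P D HS).
    intros b _ Hb. apply Hb. left; auto.
  - destruct IH as [m' [Pm' [K1 K2]]]; auto. congruence.
    destruct (latL G P D HS) as [Hmeet _]. destruct (Hmeet a m') as [m [Pm [Ma [Mm' Hm]]]]; auto.
    exists m. split; auto. split.
    + intros y [<-|Hy]; auto. apply (leL_trans G P D HS) with m'; auto.
    + intros b Pb Hb. apply Hm; auto. apply Hb; left; auto. apply K2; auto. intros y Hy. apply Hb. right; auto. Qed.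

Lemma glb_mul v m Y : P v -> Forall P Y -> P m ->
  (forall b, P b -> (forall y, In y Y -> leL b y) -> leL b m) ->
  forall b, P b -> (forall y, In y Y -> leL b (v * y)) -> leL b (v * m).
Proof. intros Pv FY Pm Hm b Pb Hb. rewrite Forall_forall in FY.
  destruct (latL G P D HS) as [_ Hjoin]. destruct (Hjoin v b) as [j [Pj [Vj [Bj Hj]]]]; auto.
  destruct Vj as [t [Pt Et]].
  assert (Ht : leL t m).
  { apply Hm; auto. intros y Hy. assert (leL j (v * y)).
    { apply Hj; auto. apply (Pmul G P D HS); auto. exists y; auto. }
    destruct H as [x [Px Ex]]. exists x. split; auto. apply (cancel_l G v). rewrite mulA, Et. auto. }
  apply (leL_trans G P D HS) with j; auto. rewrite <- Et. apply leL_mul; auto. Qed.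

Lemma central_pos w l : central G w -> 1 <= l -> P (pw w l) -> P w.
Proof. intros Hw Hl Pwl. destruct (all_frac w) as [K HK].
  set (C := pw c K). assert (HC : central G C) by (apply central_pw; auto).
  assert (PC : P C) by (apply (Ppw G P D HS), Pc).
  set (v := w * C). set (T := pw C (l - 1)).
  set (Y := map (fun i => pw w i * T) (seq 0 l)).
  assert (FY : Forall P Y).
  { unfold Y. apply Forall_forall. intros y Hy. apply in_map_iff in Hy. destruct Hy as [i [<- Hi]].
    apply in_seq in Hi. unfold T. replace (l - 1) with (i + (l - 1 - i)) by lia.
    rewrite pw_add, mulA, <- pw_mulx. apply (Pmul G P D HS). apply (Ppw G P D HS); auto. apply (Ppw G P D HS); auto.
    apply comm_sym, central_comm; auto. }
  destruct (glb_ex Y) as [m [Pm [Hm1 Hm2]]]; auto.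
  { unfold Y. destruct l. lia. simpl. congruence. }
  assert (Hb : leL (C * m) (v * m)).
  { refine (glb_mul v m Y _ FY Pm Hm2 (C * m) _ _). exact HK. apply (Pmul G P D HS); auto.
    intros y Hy. unfold Y in Hy. apply in_map_iff in Hy. destruct Hy as [i [<- Hi]].
    apply in_seq in Hi.
    assert (E : v * (pw w i * T) = C * (pw w (S i) * T)).
    { unfold v. rewrite <- (HC w). rewrite pw_S. rewrite !mulA. auto. }
    rewrite E. apply leL_mul.
    destruct (Nat.eq_dec (S i) l).
    - apply (leL_trans G P D HS) with T.
      + apply Hm1. unfold Y. apply in_map_iff. exists 0. simpl. split. apply mul1l. apply in_seq. lia.
      + exists (pw w (S i)). split. rewrite e; auto. symmetry. apply (central_pw G w (S i) Hw T).
    - apply Hm1. unfold Y. apply in_map_iff. exists (S i). split; auto. apply in_seq. lia. }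
  destruct Hb as [r [Pr Er]].
  assert (r = w). { apply (cancel_l G (C * m)). rewrite Er. unfold v. rewrite <- mulA. apply (Hw (C * m)). }
  subst; auto. Qed.

Lemma torsion u n : central G u -> 1 <= n -> pw u n = 1 -> u = 1.
Proof. intros Hu Hn E. apply (unit_inv G P D HS).
  apply (central_pos u n); auto. rewrite E. apply (P1 G P D HS).
  apply (central_pos (inv u) n); auto. apply central_inv; auto.
  rewrite <- pw_inv, E, inv_one. apply (P1 G P D HS). Qed.

Lemma root_bound : c <> 1 -> exists M, forall w l, central G w -> 1 <= l -> pw w l = c -> l <= M.
Proof. intro Hne. destruct (Pbnd G P D HS c Pc) as [M HM]. exists M.
  intros w l Hw Hl E. assert (Pw : P w). { apply (central_pos w l); auto. rewrite E. apply Pc. }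
  destruct (Pgen G P D HS w Pw) as [lw [Fw Ew]]. destruct lw as [|a lw].
  - simpl in Ew. subst. rewrite pw_one in E. congruence.
  - specialize (HM (concat (repeat (a :: lw) l))). rewrite rep_len, rep_prod, Ew in HM.
    specialize (HM (rep_Forall G _ _ _ Fw) E). simpl in HM. nia. Qed.

End Gar2.

Section Fin.
Variable G : Group.
Local Notation "x * y" := (gmul G x y).
Local Notation "1" := (gone G).
Local Notation inv := (ginv G).
Local Notation pw := (gpow_nat G).
Local Notation pz := (gpowZ G).

Lemma inv_eq_of a b : a * b = 1 -> a = inv b.
Proof. intro H. apply (cancel_r G b). rewrite H, mulVl. auto. Qed.

Lemma cyc_final w0 z l0 A B : central G w0 -> central G z -> 1 <= l0 -> A <> 0%Z ->
  pz z A = pz w0 B ->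
  (forall u n, central G u -> 1 <= n -> pw u n = 1 -> u = 1) ->
  (forall v m, central G v -> 1 <= m -> pw v (Nat.mul m l0) = pw w0 l0 -> m <= 1) ->
  exists k, z = pz w0 k.
Proof. intros Hw0 Hz Hl0 HA E Htor Hmax.
  set (g := Z.gcd A B).
  assert (Hg0 : g <> 0%Z). { intro H. apply HA. apply (Z.gcd_eq_0_l A B). auto. }
  assert (Hgp : (0 < g)%Z). { pose proof (Z.gcd_nonneg A B). unfold g in *. lia. }
  destruct (Z.gcd_divide_l A B) as [A' EA]. destruct (Z.gcd_divide_r A B) as [B' EB]. fold g in EA, EB.
  set (u := pz z A' * pz w0 (- B')).
  assert (Hu : central G u). { apply central_mul; apply central_pz; auto. }
  assert (Eu : pz u g = 1).
  { unfold u. rewrite pz_mulx. rewrite <- !pz_mul.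
    replace (Z.mul A' g) with A by lia. replace (Z.mul (- B') g) with (- B)%Z by lia.
    rewrite E, pz_opp, mulVr. auto. apply central_comm. apply central_pz; auto. }
  assert (u = 1).
  { apply (Htor u (Z.to_nat g)); auto. lia. rewrite <- pz_nat. rewrite Z2Nat.id by lia. auto. }
  assert (E' : pz z A' = pz w0 B').
  { unfold u in H. apply inv_eq_of in H. rewrite H, pz_opp, inv_inv. auto. }
  assert (Hgcd : Z.gcd A' B' = 1%Z).
  { pose proof (Z.gcd_div_gcd A B g Hg0 eq_refl) as Hd. rewrite EA, EB in Hd.
    rewrite !Z.div_mul in Hd by auto. auto. }
  destruct (Z.gcd_bezout A' B' 1 Hgcd) as [u1 [v1 Hb]].
  set (vv := pz w0 u1 * pz z v1).
  assert (Hvv : central G vv). { apply central_mul; apply central_pz; auto. }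
  assert (Evv : pz vv A' = w0).
  { unfold vv. rewrite pz_mulx. rewrite <- !pz_mul. rewrite (Z.mul_comm v1 A'), (pz_mul _ z A' v1), E', <- (pz_mul _ w0 B' v1).
    rewrite <- pz_add. replace (Z.add (Z.mul u1 A') (Z.mul B' v1)) with 1%Z by lia. apply pz_1.
    apply central_comm; apply central_pz; auto. }
  assert (HA' : A' <> 0%Z). { intro H0. apply HA. rewrite EA, H0. auto. }
  destruct (Z_cases A') as [[m Em]|[m Em]].
  - rewrite Em, pz_nat in Evv.
    assert (m <= 1). { apply (Hmax vv m); auto. lia. rewrite pw_mul, Evv. auto. }
    assert (m = S O) by lia. subst m. exists B'. rewrite <- E', Em. simpl. rewrite mul1r. auto.
  - rewrite Em, pz_negnat, pw_inv in Evv.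
    assert (m <= 1). { apply (Hmax (inv vv) m); auto. apply central_inv; auto. lia. rewrite pw_mul, Evv. auto. }
    assert (m = S O) by lia. subst m. exists (- B')%Z. rewrite pz_opp, <- E', Em. simpl.
    rewrite mul1r, inv_inv. auto. Qed.

End Fin.

Lemma nat_max (Q : nat -> Prop) M : Q 1 -> (forall l, Q l -> l <= M) ->
  exists l0, Q l0 /\ forall l, Q l -> l <= l0.
Proof. intros H1 HM. apply NNPP. intro Hn.
  assert (Hs : forall l, Q l -> exists l', Q l' /\ l < l').
  { intros l Hl. apply NNPP. intro H2. apply Hn. exists l. split; auto.
    intros l' Hl'. apply NNPP. intro H3. apply H2. exists l'. split; auto. lia. }
  assert (Hk : forall n, exists l, Q l /\ n <= l).
  { induction n. exists 1; split; auto; lia. destruct IHn as [l [Ql Hl]].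
    destruct (Hs l Ql) as [l' [Ql' Hl']]. exists l'. split; auto. lia. }
  destruct (Hk (S M)) as [l [Ql Hl]]. specialize (HM l Ql). lia. Qed.


Section Main.
Variable G : Group.
Local Notation "x * y" := (gmul G x y).
Local Notation "1" := (gone G).
Local Notation inv := (ginv G).
Local Notation pw := (gpow_nat G).
Local Notation pz := (gpowZ G).

Lemma fwd : center_cyclic G -> forall D1 D2 : G, is_garside_element_of_group G D1 ->
     is_garside_element_of_group G D2 -> commensurable G D1 D2.
Proof. intros [zg [Hzg Hgen]] D1 D2 [P1 HS1] [P2 HS2].
  destruct (delta_central G P1 D1 HS1) as [N1 [HN1 Hc1]].
  destruct (delta_central G P2 D2 HS2) as [N2 [HN2 Hc2]].
  destruct (Hgen _ Hc1) as [a Ea]. destruct (Hgen _ Hc2) as [b Eb].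
  destruct (Z.eq_dec a 0) as [Ha|Ha].
  { subst a. pose proof (triv G P1 D1 HS1 N1 HN1 Hc1 Ea) as T.
    exists 1%Z, 1%Z, 1. split; [lia|split; [lia|]]. rewrite (T (pz D2 1%Z)). apply T. }
  destruct (Z.eq_dec b 0) as [Hb|Hb].
  { subst b. pose proof (triv G P2 D2 HS2 N2 HN2 Hc2 Eb) as T.
    exists 1%Z, 1%Z, 1. split; [lia|split; [lia|]]. rewrite (T (pz D2 1%Z)). apply T. }
  exists (Z.mul (Z.of_nat N1) b), (Z.mul (Z.of_nat N2) a), 1. split; [nia|split; [nia|]].
  rewrite inv_one, mul1l, mul1r, !pz_mul, !pz_nat, Ea, Eb, <- !pz_mul, Z.mul_comm. auto. Qed.

Lemma bwd P D : garside_structure G P D ->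
  (forall D1 D2 : G, is_garside_element_of_group G D1 ->
     is_garside_element_of_group G D2 -> commensurable G D1 D2) -> center_cyclic G.
Proof. intros HS H.
  destruct (delta_central G P D HS) as [N [HN Hc]].
  destruct (classic (pw D N = 1)) as [Hc1|Hc1].
  { pose proof (triv G P D HS N HN Hc Hc1) as T. exists 1. split.
    intro x. rewrite mul1l, mul1r. auto. intros y _. exists 0%Z. rewrite (T y). auto. }
  destruct (root_bound G P D HS N HN Hc Hc1) as [M HM].
  destruct (nat_max (fun l => 1 <= l /\ exists w, central G w /\ pw w l = pw D N) M)
    as [l0 [[Hl0 [w0 [Hw0 Ew0]]] Hmaxl]].
  { split; auto. exists (pw D N). split; auto. simpl. apply mul1r. }
  { intros l [Hl [w [Hw Ew]]]. apply (HM w l); auto. }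
  exists w0. split; auto. intros y Hy.
  assert (Hr : exists A B, A <> 0%Z /\ pz y A = pz w0 B).
  { destruct (all_frac G P D HS N HN Hc y) as [k Hk].
    set (c := pw D N) in *.
    set (E := c * (y * pw c k)).
    pose proof (central_garside G P D HS N HN Hc y k Hy Hk) as GE. fold c in GE. fold E in GE.
    assert (HSE : garside_structure G P E).
    { destruct HS as [a1 [a2 [a3 [a4 [_ a6]]]]]. exact (conj a1 (conj a2 (conj a3 (conj a4 (conj GE a6))))). }
    destruct (H D E (ex_intro _ P HS) (ex_intro _ P HSE)) as [k1 [l1 [x [Hk1 [Hl1 Ex]]]]].
    assert (HE : central G E). { apply central_mul; auto. apply central_mul; auto. apply central_pw; auto. }
    assert (Ed : pz D k1 = pz E l1).
    { apply (cancel_r G x). rewrite (central_pz G E l1 HE x). rewrite <- Ex.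
      rewrite mulA, mulVr, mul1l. auto. }
    assert (Ey : E = y * pz c (Z.of_nat (S k))).
    { unfold E. rewrite pz_nat, pw_S, !mulA. f_equal. apply (Hc y). }
    set (L := Z.mul l1 (Z.of_nat N)).
    assert (E1 : pz c k1 = pz y L * pz c (Z.mul (Z.of_nat (S k)) L)).
    { assert (Ec : c = pz D (Z.of_nat N)) by (unfold c; rewrite pz_nat; auto).
      assert (E2 : pz c k1 = pz E L).
      { rewrite Ec, <- pz_mul, Z.mul_comm, pz_mul, Ed, <- pz_mul. auto. }
      rewrite E2, Ey, pz_mulx, <- (pz_mul _ c). auto. apply central_comm; auto. }
    exists L, (Z.mul (Z.of_nat l0) (Z.sub k1 (Z.mul (Z.of_nat (S k)) L))). split.
    unfold L. nia.
    rewrite pz_mul, pz_nat, Ew0. fold c. rewrite <- Z.add_opp_r, pz_add, E1, pz_opp, <- mulA, mulVr, mul1r. auto. }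
  destruct Hr as [A [B [HA EAB]]].
  apply (cyc_final G w0 y l0 A B); auto.
  - intros u n Hu Hn Eu. apply (torsion G P D HS N HN Hc u n); auto.
  - intros v m Hv Hm Ev. assert (Nat.mul m l0 <= l0).
    { apply Hmaxl. split. nia. exists v. split; auto. rewrite Ev; auto. }
    nia. Qed.

End Main.

Theorem mainTheorem1 (G : Group) (HG : garside_group G) :
  center_cyclic G <->
  (forall D1 D2 : G, is_garside_element_of_group G D1 ->
     is_garside_element_of_group G D2 -> commensurable G D1 D2).
Proof. split. apply fwd. destruct HG as [P [D HS]]. apply (bwd G P D HS). Qed.
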